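(* Let $\kappa$ be an uncountable cardinal with $\kappa=\kappa^{<\kappa}$. Then there is a closed non-empty subset of ${}^\kappa\kappa$ that is not the continuous image of ${}^\kappa\kappa$ (i.e. there is no continuous function $f:{}^\kappa\kappa\to{}^\kappa\kappa$ whose range is this set).
   Context: For a cardinal $\mu$, ${}^\kappa\mu$ is the set of all functions $x:\kappa\to\mu$ and ${}^{<\kappa}\mu$ is the set of all functions $t:\alpha\to\mu$ with $\alpha<\kappa$. The space ${}^\kappa\mu$ carries the topology whose basic open sets are $N_s=\{x\in{}^\kappa\mu : s\subseteq x\}$ for $s\in{}^{<\kappa}\mu$. *)

(* Defs.v *)
(* The cardinal kappa is represented as a type K carrying a
   strict well-order lt of order type kappa, i.e. an initial ordinal:
   every proper initial segment has strictly smaller cardinality. *)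
From Stdlib Require Import Classical.

Definition injective {A B : Type} (f : A -> B) : Prop :=
  forall x y, f x = f y -> x = y.

Definition bijective {A B : Type} (f : A -> B) : Prop :=
  injective f /\ forall y, exists x, f x = y.

Definition is_wellorder {K : Type} (lt : K -> K -> Prop) : Prop :=
  well_founded lt
  /\ (forall a b c, lt a b -> lt b c -> lt a c)
  /\ (forall a b, lt a b \/ a = b \/ lt b a).

Definition seg {K : Type} (lt : K -> K -> Prop) (a : K) : Type :=
  { b : K | lt b a }.

Definition is_cardinal {K : Type} (lt : K -> K -> Prop) : Prop :=
  is_wellorder lt /\ forall a : K, ~ exists f : K -> seg lt a, injective f.

Definition uncountable (K : Type) : Prop :=
  ~ exists f : K -> nat, injective f.

Definition short_seqs {K : Type} (lt : K -> K -> Prop) : Type :=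
  { a : K & seg lt a -> K }.

Definition kappa_lt_kappa_eq {K : Type} (lt : K -> K -> Prop) : Prop :=
  exists f : short_seqs lt -> K, bijective f.

Definition agree_below {K : Type} (lt : K -> K -> Prop) (a : K) (x y : K -> K) : Prop :=
  forall b, lt b a -> x b = y b.

Definition kopen {K : Type} (lt : K -> K -> Prop) (U : (K -> K) -> Prop) : Prop :=
  forall x, U x -> exists a : K, forall y, agree_below lt a x y -> U y.

Definition kclosed {K : Type} (lt : K -> K -> Prop) (C : (K -> K) -> Prop) : Prop :=
  kopen lt (fun x => ~ C x).

Definition kcontinuous {K : Type} (lt : K -> K -> Prop) (f : (K -> K) -> (K -> K)) : Prop :=
  forall U, kopen lt U -> kopen lt (fun x => U (f x)).

(* Main.v *)
Require Import Defs.
From Stdlib Require Import Classical ClassicalEpsilon FunctionalExtensionality ProofIrrelevance Eqdep List Lia PeanoNat Arith.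

Lemma choice_fun {A B : Type} (R : A -> B -> Prop) :
  (forall a, exists b, R a b) -> exists f : A -> B, forall a, R a (f a).
Proof.
  intros H. exists (fun a => proj1_sig (constructive_indefinite_description _ (H a))).
  intro a. exact (proj2_sig (constructive_indefinite_description _ (H a))).
Qed.

Lemma acc_irrefl {A} (R : A -> A -> Prop) a : Acc R a -> R a a -> False.
Proof. induction 1 as [a _ IH]. intros H. exact (IH a H H). Qed.

Lemma no_desc {A} (R : A -> A -> Prop) (s : nat -> A) :
  well_founded R -> (forall n, R (s (S n)) (s n)) -> False.
Proof.
  intros Hwf Hs.
  assert (H : forall a, Acc R a -> forall n, s n = a -> False).
  { induction 1 as [a _ IH]. intros n Hn.
    apply (IH (s (S n)) ltac:(rewrite <- Hn; apply Hs) (S n) eq_refl). }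
  exact (H (s 0) (Hwf _) 0 eq_refl).
Qed.

Lemma wf_incl_inv {A B} (R : A -> A -> Prop) (R' : B -> B -> Prop) (h : A -> B) :
  well_founded R' -> (forall a b, R a b -> R' (h a) (h b)) -> well_founded R.
Proof.
  intros Hwf Hinc.
  assert (H : forall y, Acc R' y -> forall a, h a = y -> Acc R a).
  { induction 1 as [y _ IH]. intros a Ha. constructor. intros b Hb.
    apply (IH (h b)). rewrite <- Ha. apply Hinc, Hb. reflexivity. }
  intro a. exact (H (h a) (Hwf _) a eq_refl).
Qed.

Section Card.
Context (K : Type) (lt : K -> K -> Prop).
Context (Hwo : is_wellorder lt).
Context (Hseg : forall a, ~ exists f : K -> seg lt a, injective f).
Context (Hunc : uncountable K).

Definition le a b := lt a b \/ a = b.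

Lemma lt_wf : well_founded lt. Proof. exact (proj1 Hwo). Qed.
Lemma lt_trans a b c : lt a b -> lt b c -> lt a c.
Proof. exact (proj1 (proj2 Hwo) a b c). Qed.
Lemma lt_tri a b : lt a b \/ a = b \/ lt b a.
Proof. exact (proj2 (proj2 Hwo) a b). Qed.
Lemma lt_irrefl a : ~ lt a a.
Proof. intro H. exact (acc_irrefl lt a (lt_wf a) H). Qed.
Lemma lt_asym a b : lt a b -> lt b a -> False.
Proof. intros H1 H2. exact (lt_irrefl a (lt_trans _ _ _ H1 H2)). Qed.

Lemma wf_min (P : K -> Prop) : (exists x, P x) -> exists m, P m /\ forall y, P y -> ~ lt y m.
Proof.
  intros [x Hx]. apply NNPP. intro Hn.
  assert (H : forall z, Acc lt z -> ~ P z).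
  { induction 1 as [z _ IH]. intro Hz. apply Hn. exists z. split; auto.
    intros y Hy Hyz. exact (IH y Hyz Hy). }
  exact (H x (lt_wf x) Hx).
Qed.

Lemma fresh : forall l : list K, exists x, ~ In x l.
Proof.
  intro l. apply NNPP. intro Hn.
  assert (Hall : forall x, In x l) by (intro x; apply NNPP; intro Hx; apply Hn; eauto).
  apply Hunc.
  exists (fun x => proj1_sig (constructive_indefinite_description _ (In_nth_error l x (Hall x)))).
  intros x y Hxy.
  pose proof (proj2_sig (constructive_indefinite_description _ (In_nth_error l x (Hall x)))) as Hx.
  pose proof (proj2_sig (constructive_indefinite_description _ (In_nth_error l y (Hall y)))) as Hy.
  simpl in Hx, Hy. rewrite Hxy in Hx. rewrite Hx in Hy. injection Hy. auto.
Qed.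

Lemma inhabited_K : exists k : K, True.
Proof. destruct (fresh nil) as [x _]. eauto. Qed.

Lemma no_max : forall m, exists x, lt m x.
Proof.
  intro m. apply NNPP. intro Hn.
  assert (Hmax : forall x, lt x m \/ x = m).
  { intro x. destruct (lt_tri x m) as [H|[H|H]]; auto. exfalso; apply Hn; eauto. }
  destruct (choice_fun (fun l x => ~ In x l) fresh) as [fr Hfr].
  pose (L := fix L (n : nat) : list K := match n with O => m :: nil | S k => fr (L k) :: L k end).
  pose (d := fun n => fr (L n)).
  assert (HmL : forall n, In m (L n)).
  { induction n; simpl; auto. }
  assert (Hmono : forall n k, forall x, In x (L n) -> In x (L (n + k))).
  { intros n k. induction k; intros x Hx.
    - rewrite Nat.add_0_r. exact Hx.
    - rewrite Nat.add_succ_r. simpl. right. auto. }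
  assert (Hdinj : forall i j, d i = d j -> i = j).
  { intros i j Hij.
    assert (Hlt : forall i j, i < j -> d i <> d j).
    { intros i0 j0 Hl Heq. assert (In (d i0) (L j0)).
      { replace j0 with (S i0 + (j0 - S i0)) by lia. apply Hmono. simpl. left. reflexivity. }
      rewrite Heq in H. exact (Hfr (L j0) H). }
    destruct (Nat.lt_trichotomy i j) as [H|[H|H]]; auto.
    - exfalso; exact (Hlt _ _ H Hij).
    - exfalso; exact (Hlt _ _ H (eq_sym Hij)). }
  assert (Hdm : forall n, d n <> m).
  { intros n Heq. apply (Hfr (L n)). fold (d n). rewrite Heq. apply HmL. }
  pose (j := fun x => if excluded_middle_informative (x = m) then d 0 else
            match excluded_middle_informative (exists n, x = d n) with
            | left Hx => d (S (proj1_sig (constructive_indefinite_description _ Hx)))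
            | right _ => x end).
  assert (Hjm : forall x, lt (j x) m).
  { intro x. destruct (Hmax (j x)) as [H|H]; auto. exfalso. revert H. unfold j.
    destruct (excluded_middle_informative (x = m)) as [_|Hxm]; [apply Hdm|].
    destruct (excluded_middle_informative _) as [Hx|_]; [apply Hdm|exact Hxm]. }
  apply (Hseg m). exists (fun x => exist _ (j x) (Hjm x)).
  intros x y Hxy. apply (f_equal (@proj1_sig _ _)) in Hxy. simpl in Hxy. revert Hxy. unfold j.
  destruct (excluded_middle_informative (x = m)) as [Hx|Hx];
  destruct (excluded_middle_informative (y = m)) as [Hy|Hy]; try congruence.
  - destruct (excluded_middle_informative (exists n, y = d n)) as [Hy2|Hy2].
    + intro H. apply Hdinj in H. discriminate.
    + intro H. exfalso. apply Hy2. eauto.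
  - destruct (excluded_middle_informative (exists n, x = d n)) as [Hx2|Hx2].
    + intro H. apply Hdinj in H. discriminate.
    + intro H. exfalso. apply Hx2. eauto.
  - destruct (excluded_middle_informative (exists n, x = d n)) as [Hx2|Hx2];
    destruct (excluded_middle_informative (exists n, y = d n)) as [Hy2|Hy2].
    + destruct (constructive_indefinite_description _ Hx2) as [a Ha].
      destruct (constructive_indefinite_description _ Hy2) as [b Hb]. simpl.
      intro H. apply Hdinj in H. injection H as ->. congruence.
    + intro H. exfalso. apply Hy2. eauto.
    + intro H. exfalso. apply Hx2. eauto.
    + auto.
Qed.


Lemma succ_ex : forall a, exists s, lt a s /\ forall y, lt a y -> le s y.
Proof.
  intro a. destruct (wf_min (fun y => lt a y) (no_max a)) as [s [Hs Hmin]].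
  exists s. split; auto. intros y Hy. unfold le.
  destruct (lt_tri s y) as [H|[H|H]]; auto. exfalso. exact (Hmin y Hy H).
Qed.

Lemma omega_seg : exists (w : K) (j : nat -> K), (forall n m, j n = j m -> n = m) /\ forall n, lt (j n) w.
Proof.
  destruct inhabited_K as [k0 _].
  destruct (wf_min (fun _ => True) (ex_intro _ k0 I)) as [m0 [_ Hm0]].
  destruct (choice_fun _ succ_ex) as [sc Hsc].
  pose (e := fix e (n : nat) : K := match n with O => m0 | S k => sc (e k) end).
  assert (Hinc : forall n k, lt (e n) (e (n + S k))).
  { intros n k. induction k.
    - rewrite Nat.add_1_r. simpl. apply (proj1 (Hsc (e n))).
    - rewrite Nat.add_succ_r. simpl. eapply lt_trans; [exact IHk|]. apply (proj1 (Hsc _)). }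
  assert (Hinj : forall n m, e n = e m -> n = m).
  { intros n m H. destruct (Nat.lt_trichotomy n m) as [Hl|[Hl|Hl]]; auto; exfalso.
    - pose proof (Hinc n (m - S n)) as X. replace (n + S (m - S n)) with m in X by lia.
      rewrite H in X. exact (lt_irrefl _ X).
    - pose proof (Hinc m (n - S m)) as X. replace (m + S (n - S m)) with n in X by lia.
      rewrite H in X. exact (lt_irrefl _ X). }
  destruct (classic (exists w, forall n, lt (e n) w)) as [[w Hw]|Hno].
  - exists w, e. auto.
  - exfalso. apply Hunc.
    assert (Hcof : forall x, exists n, le x (e n)).
    { intro x. apply NNPP. intro Hx. apply Hno. exists x. intro n.
      destruct (lt_tri (e n) x) as [H|[H|H]]; auto; exfalso; apply Hx; exists n; unfold le; auto. }
    assert (Hall : forall x, exists n, x = e n).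
    { intro x. destruct (Hcof x) as [n Hn]. revert Hn. induction n as [|k IH]; intro Hn.
      - destruct Hn as [Hn|Hn]; [exfalso; exact (Hm0 x I Hn)|]. eauto.
      - destruct Hn as [Hn|Hn]; [|eauto].
        destruct (lt_tri x (e k)) as [H|[H|H]].
        + apply IH. left; exact H.
        + apply IH. right; exact H.
        + destruct (proj2 (Hsc (e k)) x H) as [H2|H2].
          * exfalso. exact (lt_asym _ _ Hn H2).
          * simpl in Hn. rewrite H2 in Hn. exfalso. exact (lt_irrefl _ Hn). }
    exists (fun x => proj1_sig (constructive_indefinite_description _ (Hall x))).
    intros x y Hxy.
    pose proof (proj2_sig (constructive_indefinite_description _ (Hall x))) as Hx.
    pose proof (proj2_sig (constructive_indefinite_description _ (Hall y))) as Hy.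
    simpl in Hx, Hy. rewrite Hx, Hy, Hxy. reflexivity.
Qed.

Context (E : short_seqs lt -> K) (Ebij : bijective E).

Lemma E_inj : injective E. Proof. exact (proj1 Ebij). Qed.

Lemma Phi_ex : exists Phi : (nat -> K) -> K, injective Phi.
Proof.
  destruct omega_seg as [w [j [Hj Hw]]].
  pose (hbar := fun (h : nat -> K) (y : K) =>
    match excluded_middle_informative (exists n, j n = y) with
    | left Hx => h (proj1_sig (constructive_indefinite_description _ Hx))
    | right _ => y end).
  exists (fun h => E (existT (fun a => seg lt a -> K) w (fun b => hbar h (proj1_sig b)))).
  intros h1 h2 H. apply E_inj in H. apply inj_pairT2 in H.
  assert (Hb : forall h n, hbar h (j n) = h n).
  { intros h n. unfold hbar. destruct (excluded_middle_informative _) as [Hx|Hx].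
    - destruct (constructive_indefinite_description _ Hx) as [m Hm]. simpl. apply Hj in Hm. subst. reflexivity.
    - exfalso. apply Hx. eauto. }
  extensionality n. rewrite <- (Hb h1 n), <- (Hb h2 n).
  exact (f_equal (fun g => g (exist _ (j n) (Hw n))) H).
Qed.

Lemma bounded : forall s : nat -> K, exists b, forall n, lt (s n) b.
Proof.
  intro s. apply NNPP. intro Hn.
  assert (Hcof : forall b, exists n, lt b (s n)).
  { intro b. destruct (no_max b) as [b' Hb'].
    apply NNPP. intro Hx. apply Hn. exists b'. intro n.
    destruct (lt_tri (s n) b') as [H|[H|H]]; auto; exfalso; apply Hx; exists n.
    - subst; auto.
    - eapply lt_trans; eauto. }
  destruct Phi_ex as [Phi HPhi].
  assert (Hdiag : forall n, exists v, forall g, lt (Phi g) (s n) -> g n <> v).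
  { intro n. apply NNPP. intro Hx.
    assert (Hall : forall v, exists g, lt (Phi g) (s n) /\ g n = v).
    { intro v. apply NNPP. intro Hv. apply Hx. exists v. intros g Hg Hgv. apply Hv. eauto. }
    destruct (choice_fun _ Hall) as [G HG].
    apply (Hseg (s n)). exists (fun v => exist _ (Phi (G v)) (proj1 (HG v))).
    intros v v' Hvv. apply (f_equal (@proj1_sig _ _)) in Hvv. simpl in Hvv.
    apply HPhi in Hvv. rewrite <- (proj2 (HG v)), <- (proj2 (HG v')), Hvv. reflexivity. }
  destruct (choice_fun _ Hdiag) as [h Hh].
  destruct (Hcof (Phi h)) as [n Hnn].
  exact (Hh n h Hnn eq_refl).
Qed.


Lemma above2 : forall a b, exists c, lt a c /\ lt b c.
Proof.
  intros a b. destruct (bounded (fun n => match n with O => a | _ => b end)) as [c Hc].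
  exists c. split; [exact (Hc 0)|exact (Hc 1)].
Qed.

Lemma above3 : forall a b d, exists c, le a c /\ le b c /\ le d c.
Proof.
  intros a b d. destruct (bounded (fun n => match n with O => a | 1 => b | _ => d end)) as [c Hc].
  exists c. unfold le. split; [left; exact (Hc 0)|split; [left; exact (Hc 1)|left; exact (Hc 2)]].
Qed.

Context (c0 c1 c2 c3 : K).
Context (H01 : c0 <> c1) (H02 : c0 <> c2) (H03 : c0 <> c3)
        (H12 : c1 <> c2) (H13 : c1 <> c3) (H23 : c2 <> c3).

Definition bitv (z : K -> K) (u l c : K) : Prop :=
  exists g : seg lt u -> K, z u = E (existT (fun a => seg lt a -> K) u g) /\
    exists H : lt l u, g (exist _ l H) = c.

Definition code (P Q : Prop) : K :=
  if excluded_middle_informative P then (if excluded_middle_informative Q then c3 else c1)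
  else (if excluded_middle_informative Q then c2 else c0).

Definition enc (R : K -> K -> Prop) : K -> K :=
  fun u => E (existT (fun a => seg lt a -> K) u
     (fun l : seg lt u => code (R (proj1_sig l) u) (R u (proj1_sig l)))).

Definition Rz (z : K -> K) (b a : K) : Prop :=
  (bitv z a b c1 \/ bitv z a b c3) \/ (bitv z b a c2 \/ bitv z b a c3).

Lemma bitv_enc R u l c : bitv (enc R) u l c -> lt l u /\ code (R l u) (R u l) = c.
Proof.
  intros [g [Hg [H Hc]]]. unfold enc in Hg. apply E_inj in Hg. apply inj_pairT2 in Hg.
  split; auto. rewrite <- Hc, <- Hg. reflexivity.
Qed.

Lemma code_13 P Q : code P Q = c1 \/ code P Q = c3 -> P.
Proof.
  unfold code. destruct (excluded_middle_informative P); auto.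
  destruct (excluded_middle_informative Q); intros [H|H]; exfalso; auto.
Qed.

Lemma code_23 P Q : code P Q = c2 \/ code P Q = c3 -> Q.
Proof.
  unfold code. destruct (excluded_middle_informative Q); auto.
  destruct (excluded_middle_informative P); intros [H|H]; exfalso; auto.
Qed.

Lemma dec_enc1 R b a : Rz (enc R) b a -> R b a.
Proof.
  intros [[H|H]|[H|H]]; apply bitv_enc in H; destruct H as [_ H].
  - apply (code_13 _ (R a b)); auto.
  - apply (code_13 _ (R a b)); auto.
  - apply (code_23 (R a b)); auto.
  - apply (code_23 (R a b)); auto.
Qed.

Lemma dec_enc2 R b a : b <> a -> R b a -> Rz (enc R) b a.
Proof.
  intros Hne HR. destruct (lt_tri b a) as [H|[H|H]]; [|contradiction|].
  - left. unfold code.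
    assert (Hb : bitv (enc R) a b (code (R b a) (R a b))).
    { exists (fun l : seg lt a => code (R (proj1_sig l) a) (R a (proj1_sig l))).
      split; [reflexivity|]. exists H. reflexivity. }
    unfold code in Hb. destruct (excluded_middle_informative (R b a)) as [_|Hn]; [|contradiction].
    destruct (excluded_middle_informative (R a b)); auto.
  - right.
    assert (Hb : bitv (enc R) b a (code (R a b) (R b a))).
    { exists (fun l : seg lt b => code (R (proj1_sig l) b) (R b (proj1_sig l))).
      split; [reflexivity|]. exists H. reflexivity. }
    unfold code in Hb. destruct (excluded_middle_informative (R b a)) as [_|Hn]; [|contradiction].
    destruct (excluded_middle_informative (R a b)); auto.
Qed.

Lemma bitv_agree a z y u l c : agree_below lt a z y -> lt u a -> bitv z u l c -> bitv y u l c.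
Proof.
  intros Hag Hu [g [Hg Hc]]. exists g. split; auto. rewrite <- Hag; auto.
Qed.

Lemma Rz_agree a z y b c : agree_below lt a z y -> lt b a -> lt c a -> Rz z b c -> Rz y b c.
Proof.
  intros Hag Hb Hc [[H|H]|[H|H]].
  - left; left. eapply bitv_agree; eauto.
  - left; right. eapply bitv_agree; eauto.
  - right; left. eapply bitv_agree; eauto.
  - right; right. eapply bitv_agree; eauto.
Qed.

Definition Cset (z : K -> K) : Prop :=
  forall a : K, well_founded (fun u v : seg lt a => Rz z (proj1_sig u) (proj1_sig v)).

Lemma Cset_closed : kclosed lt Cset.
Proof.
  intros z Hz. apply not_all_ex_not in Hz. destruct Hz as [a Ha].
  exists a. intros y Hag HC. apply Ha.
  apply (wf_incl_inv _ _ (fun u => u) (HC a)).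
  intros u v H. simpl. apply (Rz_agree a z y); auto; apply proj2_sig.
Qed.

Lemma Cset_enc R : well_founded R -> Cset (enc R).
Proof.
  intros Hwf a. apply (wf_incl_inv _ R (@proj1_sig _ _) Hwf).
  intros u v H. apply dec_enc1. exact H.
Qed.

Lemma Cset_nonempty : exists z, Cset z.
Proof.
  exists (enc (fun _ _ => False)). apply Cset_enc. intro a. constructor. intros b [].
Qed.

Definition N (t : short_seqs lt) (y : K -> K) : Prop :=
  forall b (H : lt b (projT1 t)), y b = projT2 t (exist _ b H).

Definition ext (t' t : short_seqs lt) : Prop :=
  forall b (H : lt b (projT1 t)), exists H' : lt b (projT1 t'),
    projT2 t' (exist _ b H') = projT2 t (exist _ b H).

Lemma ext_N t' t y : ext t' t -> N t' y -> N t y.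
Proof.
  intros He Hn b H. destruct (He b H) as [H' Heq]. rewrite <- Heq. apply Hn.
Qed.

Lemma ext_refl t : ext t t.
Proof. intros b H. exists H. reflexivity. Qed.

Lemma ext_trans t1 t2 t3 : ext t1 t2 -> ext t2 t3 -> ext t1 t3.
Proof.
  intros X12 X23 b H. destruct (X23 b H) as [H' E1]. destruct (X12 b H') as [H'' E2].
  exists H''. rewrite E2. exact E1.
Qed.

Definition restr (x : K -> K) (d : K) : short_seqs lt :=
  existT (fun a => seg lt a -> K) d (fun b => x (proj1_sig b)).

Lemma ext_restr x d d' : le d d' -> ext (restr x d') (restr x d).
Proof.
  intros Hle b H. simpl in *. assert (H' : lt b d').
  { destruct Hle as [Hle|Hle]; [eapply lt_trans; eauto|subst; auto]. }
  exists H'. reflexivity.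
Qed.

Lemma N_restr x d y : N (restr x d) y -> forall b, lt b d -> y b = x b.
Proof. intros Hn b Hb. exact (Hn b Hb). Qed.

Lemma chain_union (t : nat -> short_seqs lt) :
  (forall n, ext (t (S n)) (t n)) -> exists y, forall n, N (t n) y.
Proof.
  intros Hch.
  assert (Hle : forall n k, ext (t (n + k)) (t n)).
  { intros n k. induction k.
    - rewrite Nat.add_0_r. apply ext_refl.
    - rewrite Nat.add_succ_r. eapply ext_trans; [apply Hch|exact IHk]. }
  assert (Hle' : forall n m, n <= m -> ext (t m) (t n)).
  { intros n m H. replace m with (n + (m - n)) by lia. apply Hle. }
  exists (fun b => match excluded_middle_informative (exists n, lt b (projT1 (t n))) with
    | left Hx => projT2 (t (proj1_sig (constructive_indefinite_description _ Hx)))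
                   (exist _ b (proj2_sig (constructive_indefinite_description _ Hx)))
    | right _ => b end).
  intros m b Hb.
  destruct (excluded_middle_informative _) as [Hx|Hx]; [|exfalso; apply Hx; eauto].
  destruct (constructive_indefinite_description _ Hx) as [n Hn]. simpl.
  destruct (Nat.le_ge_cases n m) as [Hnm|Hnm].
  - destruct (Hle' n m Hnm b Hn) as [H' Heq].
    rewrite <- Heq. f_equal. f_equal. apply proof_irrelevance.
  - destruct (Hle' m n Hnm b Hb) as [H' Heq].
    rewrite <- Heq. f_equal. f_equal. apply proof_irrelevance.
Qed.

Section Main.
Context (f : (K -> K) -> (K -> K)) (Hf : kcontinuous lt f)
        (Himg : forall y, Cset y <-> exists x, f x = y).

Definition PP := (K * short_seqs lt)%type.

Definition prec (p' p : PP) : Prop :=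
  ext (snd p') (snd p) /\ forall y, N (snd p') y -> Rz (f y) (fst p') (fst p).

Lemma prec_wf : well_founded prec.
Proof.
  intro p. apply NNPP. intro Hp.
  assert (Hstep : forall q, exists q', ~ Acc prec q -> prec q' q /\ ~ Acc prec q').
  { intro q. destruct (classic (Acc prec q)) as [Ha|Ha].
    - exists q. intro; contradiction.
    - apply NNPP. intro Hn. apply Ha. constructor. intros q' Hq'. apply NNPP. intro Hq''.
      apply Hn. exists q'. intros _. auto. }
  destruct (choice_fun _ Hstep) as [F HF].
  pose (s := fix s (n : nat) : PP := match n with O => p | S k => F (s k) end).
  assert (HnA : forall n, ~ Acc prec (s n)).
  { induction n; [exact Hp|]. simpl. exact (proj2 (HF _ IHn)). }
  assert (Hpr : forall n, prec (s (S n)) (s n)).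
  { intro n. exact (proj1 (HF _ (HnA n))). }
  destruct (chain_union (fun n => snd (s n)) (fun n => proj1 (Hpr n))) as [y Hy].
  destruct (bounded (fun n => fst (s n))) as [B HB].
  assert (HC : Cset (f y)) by (apply Himg; eauto).
  apply (no_desc _ (fun n => exist (fun b => lt b B) (fst (s n)) (HB n)) (HC B)).
  intro n. simpl. apply (proj2 (Hpr n)). apply Hy.
Qed.

Inductive Sim : PP -> PP -> Prop :=
  SimI p q : (forall p', prec p' p -> exists q', prec q' q /\ Sim p' q') -> Sim p q.

Lemma Sim_inv p q : Sim p q -> forall p', prec p' p -> exists q', prec q' q /\ Sim p' q'.
Proof. destruct 1. auto. Qed.

Lemma Sim_refl p : Sim p p.
Proof.
  induction p as [p IH] using (well_founded_induction prec_wf).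
  constructor. intros p' Hp'. exists p'. auto.
Qed.

Lemma Sim_trans p q r : Sim p q -> Sim q r -> Sim p r.
Proof.
  revert q r. induction p as [p IH] using (well_founded_induction prec_wf).
  intros q r Hpq Hqr. constructor. intros p' Hp'.
  destruct (Sim_inv _ _ Hpq p' Hp') as [q' [Hq' Hs1]].
  destruct (Sim_inv _ _ Hqr q' Hq') as [r' [Hr' Hs2]].
  exists r'. split; auto. eapply IH; eauto.
Qed.

Definition sq (p q : PP) : Prop := exists q', prec q' q /\ Sim p q'.

Lemma sq_wf : well_founded sq.
Proof.
  assert (H : forall p r, Sim r p -> Acc sq r).
  { intro p. induction p as [p IH] using (well_founded_induction prec_wf).
    intros r Hrp. constructor. intros r' [q [Hq Hs]].
    destruct (Sim_inv _ _ Hrp q Hq) as [p' [Hp' Hs2]].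
    apply (IH p' Hp'). eapply Sim_trans; eauto. }
  intro p. apply (H p). apply Sim_refl.
Qed.

Lemma tot p q : Sim p q \/ sq q p.
Proof.
  revert q. induction p as [p IH] using (well_founded_induction prec_wf). intro q.
  destruct (classic (Sim p q)) as [H|H]; [left; exact H|right].
  assert (Hex : exists p', prec p' p /\ forall q', prec q' q -> ~ Sim p' q').
  { apply NNPP. intro Hn. apply H. constructor. intros p' Hp'. apply NNPP. intro Hx.
    apply Hn. exists p'. split; auto. intros q' Hq' Hs. apply Hx. eauto. }
  destruct Hex as [p' [Hp' Hno]]. exists p'. split; auto.
  constructor. intros q' Hq'. destruct (IH p' Hp' q') as [Hs|[r [Hr Hs]]].
  - exfalso. exact (Hno q' Hq' Hs).
  - exists r. auto.
Qed.

Lemma Sim_sq a b c : Sim a b -> sq b c -> sq a c.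
Proof. intros H1 [c' [Hc' H2]]. exists c'. split; auto. eapply Sim_trans; eauto. Qed.

Lemma sq_Sim a b c : sq a b -> Sim b c -> sq a c.
Proof.
  intros [b' [Hb' H1]] H2. destruct (Sim_inv _ _ H2 b' Hb') as [c' [Hc' H3]].
  exists c'. split; auto. eapply Sim_trans; eauto.
Qed.

Lemma prec_sq a b : prec a b -> sq a b.
Proof. intro H. exists a. split; auto. apply Sim_refl. Qed.

Lemma main_false : False.
Proof.
  destruct Phi_ex as [Phi HPhi].
  pose (e := fun p : PP => Phi (fun n => match n with O => fst p | 1 => E (snd p) | _ => c0 end)).
  pose (tau := Phi (fun n => match n with O => c0 | 1 => c0 | _ => c1 end)).
  assert (He_inj : forall p p', e p = e p' -> p = p').
  { intros [a t] [a' t'] H. apply HPhi in H.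
    pose proof (f_equal (fun g => g 0) H) as H0. pose proof (f_equal (fun g => g 1) H) as H1.
    simpl in H0, H1. apply E_inj in H1. subst. reflexivity. }
  assert (Htau : forall p, e p <> tau).
  { intros p H. apply HPhi in H. pose proof (f_equal (fun g => g 2) H) as H2. simpl in H2. auto. }
  pose (Rstar := fun b a => (exists p p', b = e p' /\ a = e p /\ prec p' p) \/ (a = tau /\ exists p, b = e p)).
  assert (Rstar_wf : well_founded Rstar).
  { assert (HA : forall p, Acc Rstar (e p)).
    { intro p. induction p as [p IH] using (well_founded_induction prec_wf).
      constructor. intros b [[q [q' [Hb [Ha Hpq]]]]|[Ha _]].
      - apply He_inj in Ha. subst. apply IH. exact Hpq.
      - exfalso. exact (Htau p Ha). }
    intro a. constructor. intros b [[q [q' [Hb _]]]|[_ [q Hb]]]; subst; apply HA. }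
  destruct (proj1 (Himg (enc Rstar)) (Cset_enc Rstar Rstar_wf)) as [x Hx].
  assert (HR : forall b a, Rstar b a -> Rz (f x) b a).
  { intros b a H. rewrite Hx. apply dec_enc2; auto. intro Hba. subst.
    exact (acc_irrefl _ _ (Rstar_wf a) H). }
  pose (pt := fun (a d : K) => (a, restr x d) : PP).
  assert (Hmono : forall a d d', le d d' -> Sim (pt a d') (pt a d)).
  { intros a d d' Hle. constructor. intros q [Hq1 Hq2]. exists q. split; [|apply Sim_refl].
    split; auto. eapply ext_trans; [exact Hq1|]. apply ext_restr. exact Hle. }
  assert (Hstab : forall a, exists d, forall d', le d d' -> Sim (pt a d) (pt a d')).
  { intro a. apply NNPP. intro Hn.
    assert (Hs : forall d, exists d', sq (pt a d') (pt a d)).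
    { intro d. apply NNPP. intro Hd. apply Hn. exists d. intros d' _.
      destruct (tot (pt a d) (pt a d')) as [H|H]; auto. exfalso. apply Hd. eauto. }
    destruct (choice_fun _ Hs) as [F HF].
    destruct inhabited_K as [k0 _].
    pose (s := fix s (n : nat) : K := match n with O => k0 | S m => F (s m) end).
    apply (no_desc sq (fun n => pt a (s n)) sq_wf). intro n. simpl. apply HF. }
  destruct (choice_fun _ Hstab) as [dd Hdd].
  pose (Hh := fun a => pt a (dd a)).
  assert (Hkey : forall b a, Rz (f x) b a -> sq (Hh b) (Hh a)).
  { intros b a Hba.
    assert (HU : kopen lt (fun w => Rz w b a)).
    { intros w Hw. destruct (above2 a b) as [c [Hac Hbc]]. exists c. intros y Hag.
      eapply Rz_agree; eauto. }
    destruct (Hf _ HU x Hba) as [a' Ha'].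
    destruct (above3 a' (dd a) (dd b)) as [d [Hd1 [Hd2 Hd3]]].
    assert (Hp : prec (pt b d) (pt a d)).
    { split; [apply ext_refl|]. intros y Hy. apply Ha'. intros c Hc. symmetry.
      apply (N_restr x d y Hy). destruct Hd1 as [Hd1|Hd1]; [eapply lt_trans; eauto|subst; auto]. }
    apply (Sim_sq _ (pt b d)); [apply Hdd; exact Hd3|].
    apply (sq_Sim _ (pt a d)); [apply prec_sq; exact Hp|].
    apply Hmono. exact Hd2. }
  pose (g := fun p => Hh (e p)).
  assert (Hg1 : forall p p', prec p' p -> sq (g p') (g p)).
  { intros p p' H. apply Hkey. apply HR. left. exists p, p'. auto. }
  assert (Hg2 : forall p, sq (g p) (Hh tau)).
  { intro p. apply Hkey. apply HR. right. split; eauto. }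
  assert (Hinfl : forall p, Sim p (g p)).
  { intro p. induction p as [p IH] using (well_founded_induction prec_wf).
    constructor. intros p' Hp'. destruct (Hg1 p p' Hp') as [q [Hq Hs]].
    exists q. split; auto. eapply Sim_trans; eauto. }
  pose (qs := Hh tau).
  apply (acc_irrefl sq qs (sq_wf qs)).
  apply (Sim_sq _ (g qs)); [apply Hinfl|apply Hg2].
Qed.

End Main.
End Card.

Theorem theorem1p5 (K : Type) (lt : K -> K -> Prop)
  (Hcard : is_cardinal lt) (Hunc : uncountable K) (Hpow : kappa_lt_kappa_eq lt) :
  exists C : (K -> K) -> Prop,
    kclosed lt C /\ (exists x, C x) /\
    ~ exists f : (K -> K) -> (K -> K),
        kcontinuous lt f /\ (forall y, C y <-> exists x, f x = y).
Proof.
  destruct Hcard as [Hwo Hseg]. destruct Hpow as [E Ebij].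
  destruct (fresh K Hunc nil) as [c0 Hc0].
  destruct (fresh K Hunc (c0 :: nil)) as [c1 Hc1].
  destruct (fresh K Hunc (c1 :: c0 :: nil)) as [c2 Hc2].
  destruct (fresh K Hunc (c2 :: c1 :: c0 :: nil)) as [c3 Hc3].
  simpl in Hc1, Hc2, Hc3.
  assert (H01 : c0 <> c1) by (intro; apply Hc1; auto).
  assert (H02 : c0 <> c2) by (intro; apply Hc2; auto).
  assert (H03 : c0 <> c3) by (intro; apply Hc3; auto).
  assert (H12 : c1 <> c2) by (intro; apply Hc2; auto).
  assert (H13 : c1 <> c3) by (intro; apply Hc3; auto).
  assert (H23 : c2 <> c3) by (intro; apply Hc3; auto).
  exists (Cset K lt E c1 c2 c3). split; [apply Cset_closed|]. split.
  - exact (Cset_nonempty K lt E Ebij c0 c1 c2 c3 H01 H02 H03 H12 H13 H23).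
  - intros [f [Hf Himg]].
    exact (main_false K lt Hwo Hseg Hunc E Ebij c0 c1 c2 c3 H01 H02 H03 H12 H13 H23 f Hf Himg).
Qed.
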